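(* Let $w,v$ be fixed complex numbers with $\mathrm{Re}(w)\leq1$ and $w\neq1$. Then for every integer $R\geq1$, as real $n\to\infty$, \[ S_n(w;v)=U_0(w;v)+\frac{U_1(w;v)}{n}+\cdots+\frac{U_{R-1}(w;v)}{n^{R-1}}+O\!\left(\frac{1}{n^R}\right), \] with an implied constant depending only on $w$, $v$ and $R$.
   Context: For real $n>0$ with $\mathrm{Re}(n+v)>-1$, $S_n(w;v)=1+nw\int_0^1 e^{nw(1-z)}z^{n+v}\,dz$ (for integers $n\geq1$, $n+v\geq0$, $w\neq0$ it satisfies $e^{nw}=\sum_{j=0}^{n+v-1}\frac{(nw)^j}{j!}+\frac{(nw)^{n+v}}{(n+v)!}S_n(w;v)$). De Moivre polynomial $\mathcal{A}_{n,k}(a_1,a_2,\dots)$: coefficient of $x^n$ in $(a_1x+a_2x^2+\cdots)^k$. $\binom{v}{j}=v(v-1)\cdots(v-j+1)/j!$; $\delta_{r,0}$ Kronecker delta. $U_r(w;v)=\delta_{r,0}-\sum_{m=0}^{r}(-1)^m\binom{v}{r-m}\sum_{k=0}^{m}\frac{w}{(w-1)^{r+k+1}}\frac{(r+k)!}{k!}\mathcal{A}_{m,k}(\frac12,\frac13,\frac14,\dots)$. *)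

(* Defs.v *)
From Stdlib Require Import Reals Factorial.
From Coquelicot Require Import Coquelicot.
Open Scope R_scope.

Definition cexp (z : C) : C := (exp (Re z) * cos (Im z), exp (Re z) * sin (Im z)).

(* z^s for real z > 0 and complex s, principal branch z^s = e^{s ln z};
   set to 0 at z <= 0 (only z in [0,1] is used, and z = 0 is a single point). *)
Definition rcpow (z : R) (s : C) : C :=
  if Rlt_dec 0 z then cexp (Cmult s (RtoC (ln z))) else RtoC 0.

Definition CRInt (f : R -> C) (a b : R) : C :=
  (RInt (fun t => Re (f t)) a b, RInt (fun t => Im (f t)) a b).

Definition S_fun (n : R) (w v : C) : C :=
  Cplus (RtoC 1)
    (Cmult (Cmult (RtoC n) w)
       (CRInt (fun z => Cmult (cexp (Cmult (Cmult (RtoC n) w) (RtoC (1 - z))))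
                              (rcpow z (Cplus (RtoC n) v))) 0 1)).

Fixpoint csum (f : nat -> C) (n : nat) : C :=
  match n with
  | O => RtoC 0
  | S n' => Cplus (csum f n') (f n')
  end.

Fixpoint rsum (f : nat -> R) (n : nat) : R :=
  match n with
  | O => 0
  | S n' => rsum f n' + f n'
  end.

Fixpoint cfalling (v : C) (j : nat) : C :=
  match j with
  | O => RtoC 1
  | S j' => Cmult (cfalling v j') (Cminus v (RtoC (INR j')))
  end.
Definition cbinom (v : C) (j : nat) : C := Cdiv (cfalling v j) (RtoC (INR (Factorial.fact j))).

(* De Moivre polynomial A_{m,k}(a_1,a_2,...) = coefficient of x^m in
   (a_1 x + a_2 x^2 + ...)^k, computed via P^{k+1} = P * P^k (Cauchy product):
   A_{m,0} = delta_{m,0},  A_{m,k+1} = \sum_{j=1}^{m} a_j A_{m-j,k}. *)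
Fixpoint deMoivre (a : nat -> R) (m k : nat) : R :=
  match k with
  | O => if Nat.eqb m 0 then 1 else 0
  | S k' => rsum (fun i => a (S i) * deMoivre a (m - S i)%nat k') m
  end.

Definition harm_seq (j : nat) : R := / INR (S j).

Definition U_fun (r : nat) (w v : C) : C :=
  Cminus (RtoC (if Nat.eqb r 0 then 1 else 0))
    (csum (fun m =>
       Cmult (Cmult (RtoC ((-1) ^ m)) (cbinom v (r - m)))
         (csum (fun k =>
            Cmult (Cdiv w (Cpow (Cminus w (RtoC 1)) (r + k + 1)))
                  (RtoC (INR (Factorial.fact (r + k)) / INR (Factorial.fact k) * deMoivre harm_seq m k)))
          (S m)))
     (S r)).

(* Main.v *)
Require Import Defs.
From Stdlib Require Import Reals Lra Lia.
From Coquelicot Require Import Coquelicot.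
Open Scope R_scope.

Lemma Ceq (a b : C) : fst a = fst b -> snd a = snd b -> a = b.
Proof. destruct a, b; simpl; intros; subst; reflexivity. Qed.

Lemma sc1 y : sin y ^ 2 + cos y ^ 2 = 1.
Proof. rewrite <- (sin2_cos2 y); unfold Rsqr; ring. Qed.

Lemma Cmod_cexp z : Cmod (cexp z) = exp (fst z).
Proof.
  destruct z as [x y]. unfold Cmod, cexp; simpl.
  replace (exp x * cos y * (exp x * cos y * 1) + exp x * sin y * (exp x * sin y * 1))
    with ((exp x)^2 * (sin y ^2 + cos y ^2)) by ring.
  rewrite sc1, Rmult_1_r. apply sqrt_pow2. left; apply exp_pos.
Qed.

Definition psi (k b : C) (z : R) : C :=
  Cmult (cexp (Cmult k (RtoC (1 - z)))) (rcpow z b).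

Lemma psi_pos k b t : 0 < t -> psi k b t =
  (exp (fst k * (1-t) + fst b * ln t) * cos (snd k * (1-t) + snd b * ln t),
   exp (fst k * (1-t) + fst b * ln t) * sin (snd k * (1-t) + snd b * ln t)).
Proof.
  intros Ht. unfold psi, rcpow. destruct (Rlt_dec 0 t) as [_|H]; [|lra].
  destruct k as [k1 k2], b as [b1 b2]. unfold cexp, Cmult, RtoC; simpl.
  apply Ceq; simpl.
  - replace (k1 * (1 - t) - k2 * 0) with (k1 * (1-t)) by ring.
    replace (k1 * 0 + k2 * (1 - t)) with (k2 * (1-t)) by ring.
    replace (b1 * ln t - b2 * 0) with (b1 * ln t) by ring.
    replace (b1 * 0 + b2 * ln t) with (b2 * ln t) by ring.
    rewrite exp_plus, cos_plus. ring.
  - replace (k1 * (1 - t) - k2 * 0) with (k1 * (1-t)) by ring.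
    replace (k1 * 0 + k2 * (1 - t)) with (k2 * (1-t)) by ring.
    replace (b1 * ln t - b2 * 0) with (b1 * ln t) by ring.
    replace (b1 * 0 + b2 * ln t) with (b2 * ln t) by ring.
    rewrite exp_plus, sin_plus. ring.
Qed.

Lemma psi_nonpos k b t : t <= 0 -> psi k b t = RtoC 0.
Proof.
  intros Ht. unfold psi, rcpow. destruct (Rlt_dec 0 t) as [H|_]; [lra|].
  apply Ceq; simpl; ring.
Qed.

Lemma Cmod_psi k b t : 0 < t -> Cmod (psi k b t) = exp (fst k * (1-t) + fst b * ln t).
Proof.
  intros Ht. rewrite psi_pos by exact Ht.
  set (E := exp _). set (y := snd k * _ + _).
  unfold Cmod; simpl.
  replace (E * cos y * (E * cos y * 1) + E * sin y * (E * sin y * 1))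
    with (E^2 * (sin y ^2 + cos y ^2)) by ring.
  rewrite sc1, Rmult_1_r. apply sqrt_pow2. left; apply exp_pos.
Qed.

Lemma psi_one k b : psi k b 1 = RtoC 1.
Proof.
  rewrite psi_pos by lra. rewrite ln_1.
  replace (fst k * (1 - 1) + fst b * 0) with 0 by ring.
  replace (snd k * (1 - 1) + snd b * 0) with 0 by ring.
  rewrite exp_0, cos_0, sin_0. apply Ceq; simpl; ring.
Qed.

Lemma psi_shift k b t : psi k b t = Cmult (RtoC t) (psi k (Cminus b (RtoC 1)) t).
Proof.
  destruct (Rle_lt_dec t 0) as [H|H].
  - rewrite !psi_nonpos by exact H. apply Ceq; simpl; ring.
  - rewrite !psi_pos by exact H.
    replace (fst (Cminus b (RtoC 1))) with (fst b - 1) by (destruct b; simpl; ring).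
    replace (snd (Cminus b (RtoC 1))) with (snd b) by (destruct b; simpl; ring).
    replace (fst k * (1 - t) + (fst b - 1) * ln t) with
      ((fst k * (1 - t) + fst b * ln t) + - ln t) by ring.
    rewrite (exp_plus (fst k * (1 - t) + fst b * ln t)), exp_Ropp, exp_ln by exact H.
    apply Ceq; simpl; field; lra.
Qed.

Definition cderiv (f : R -> C) (x : R) (l : C) :=
  is_derive (fun t => fst (f t)) x (fst l) /\ is_derive (fun t => snd (f t)) x (snd l).

Lemma isd_plus (f g : R -> R) (x a b : R) : is_derive f x a -> is_derive g x b ->
  is_derive (fun t => f t + g t) x (a + b).
Proof. intros. apply (is_derive_plus f g); auto. Qed.
Lemma isd_minus (f g : R -> R) (x a b : R) : is_derive f x a -> is_derive g x b ->
  is_derive (fun t => f t - g t) x (a - b).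
Proof. intros. apply (is_derive_minus f g); auto. Qed.
Lemma isd_mult (f g : R -> R) (x a b : R) : is_derive f x a -> is_derive g x b ->
  is_derive (fun t => f t * g t) x (a * g x + f x * b).
Proof. intros. apply (is_derive_mult f g); auto. intros; apply Rmult_comm. Qed.
Lemma isd_ext (f g : R -> R) (x a b : R) : (forall t, f t = g t) -> a = b -> is_derive f x a -> is_derive g x b.
Proof. intros H1 H2 H3. subst b. apply (is_derive_ext f g); auto. Qed.

Lemma cderiv_plus f g x a b : cderiv f x a -> cderiv g x b ->
  cderiv (fun t => Cplus (f t) (g t)) x (Cplus a b).
Proof. intros [H1 H2] [H3 H4]; split; simpl; apply isd_plus; auto. Qed.

Lemma cderiv_mult f g x a b : cderiv f x a -> cderiv g x b ->
  cderiv (fun t => Cmult (f t) (g t)) x (Cplus (Cmult a (g x)) (Cmult (f x) b)).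
Proof.
  intros [H1 H2] [H3 H4]; split.
  - apply (isd_ext (fun t => fst (f t) * fst (g t) - snd (f t) * snd (g t))
      _ _ ((fst a * fst (g x) + fst (f x) * fst b) - (snd a * snd (g x) + snd (f x) * snd b))).
    + intros; reflexivity.
    + simpl; ring.
    + apply isd_minus; apply isd_mult; auto.
  - apply (isd_ext (fun t => fst (f t) * snd (g t) + snd (f t) * fst (g t))
      _ _ ((fst a * snd (g x) + fst (f x) * snd b) + (snd a * fst (g x) + snd (f x) * fst b))).
    + intros; reflexivity.
    + simpl; ring.
    + apply isd_plus; apply isd_mult; auto.
Qed.

Lemma cderiv_const (c : C) x : cderiv (fun _ => c) x (RtoC 0).
Proof. split; simpl; apply (is_derive_const (K:=R_AbsRing) (V:=R_NormedModule)). Qed.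

Lemma cderiv_id x : cderiv (fun t => RtoC t) x (RtoC 1).
Proof. split; simpl. apply (is_derive_id (K:=R_AbsRing)). apply (is_derive_const (K:=R_AbsRing) (V:=R_NormedModule)). Qed.

Lemma cderiv_ext f g x a b : (forall t, f t = g t) -> a = b -> cderiv f x a -> cderiv g x b.
Proof.
  intros H1 H2 [H3 H4]. subst b. split.
  - apply (isd_ext (fun t => fst (f t)) _ _ _ _ (fun t => f_equal fst (H1 t)) eq_refl H3).
  - apply (isd_ext (fun t => snd (f t)) _ _ _ _ (fun t => f_equal snd (H1 t)) eq_refl H4).
Qed.

Lemma cderiv_continuous f x l : cderiv f x l ->
  continuous (fun t => fst (f t)) x /\ continuous (fun t => snd (f t)) x.
Proof.
  intros [H1 H2]; split.
  - apply (ex_derive_continuous (K:=R_AbsRing) (V:=R_NormedModule)). exists (fst l); exact H1.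
  - apply (ex_derive_continuous (K:=R_AbsRing) (V:=R_NormedModule)). exists (snd l); exact H2.
Qed.

Lemma im_le_Cmod c : Rabs (snd c) <= Cmod c.
Proof.
  destruct c as [a b]; unfold Cmod; simpl. rewrite <- sqrt_Rsqr_abs.
  apply sqrt_le_1_alt. unfold Rsqr. nra.
Qed.

Lemma Cmod_le_sum c : Cmod c <= Rabs (fst c) + Rabs (snd c).
Proof.
  destruct c as [a b]; unfold Cmod; simpl.
  assert (Ha := Rabs_pos a). assert (Hb := Rabs_pos b).
  apply Rle_trans with (sqrt ((Rabs a + Rabs b)^2)).
  - apply sqrt_le_1_alt.
    assert (Rabs a ^ 2 = a ^ 2) by apply pow2_abs.
    assert (Rabs b ^ 2 = b ^ 2) by apply pow2_abs.
    nra.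
  - rewrite sqrt_pow2; lra.
Qed.

Lemma deriv0 (g : R -> R) K1 p : 1 < p -> (forall h, h <= 0 -> g h = 0) ->
  (forall h, 0 < h -> Rabs (g h) <= exp (K1 * (1-h) + p * ln h)) -> is_derive g 0 0.
Proof.
  intros Hp H0 Hb. apply is_derive_Reals. intros eps Heps.
  set (c := (ln eps - Rabs K1)/(p-1)).
  set (d := Rmin 1 (exp c)).
  assert (Hd : 0 < d) by (apply Rmin_pos; [lra|apply exp_pos]).
  exists (mkposreal d Hd). intros h Hh0 Hhd. simpl in Hhd.
  rewrite (H0 0) by lra. rewrite Rplus_0_l, Rminus_0_r.
  destruct (Rle_lt_dec h 0) as [Hh|Hh].
  - rewrite H0 by lra. unfold Rdiv. rewrite Rminus_0_r, Rmult_0_l, Rabs_R0. lra.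
  - rewrite Rabs_pos_eq in Hhd by lra.
    assert (h1 : h < 1) by (apply Rlt_le_trans with d; [lra| apply Rmin_l]).
    assert (h2 : h < exp c) by (apply Rlt_le_trans with d; [lra| apply Rmin_r]).
    assert (Hl : ln h < c) by (rewrite <- (ln_exp c); apply ln_increasing; lra).
    assert (Hk : K1 * (1 - h) <= Rabs K1).
    { apply Rle_trans with (Rabs (K1 * (1-h))). apply RRle_abs.
      rewrite Rabs_mult, (Rabs_pos_eq (1-h)) by lra.
      assert (0 <= Rabs K1) by apply Rabs_pos. nra. }
    assert (Hc : (p - 1) * c = ln eps - Rabs K1) by (unfold c; field; lra).
    unfold Rdiv. rewrite Rminus_0_r, Rabs_mult, Rabs_inv, (Rabs_pos_eq h) by lra.
    apply Rle_lt_trans with (exp (K1 * (1 - h) + p * ln h) * / h).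
    + apply Rmult_le_compat_r; [left; apply Rinv_0_lt_compat; lra| apply Hb; lra].
    + replace (K1 * (1 - h) + p * ln h) with ((K1 * (1 - h) + (p-1) * ln h) + ln h) by ring.
      rewrite exp_plus, exp_ln by lra. rewrite Rmult_assoc, Rinv_r, Rmult_1_r by lra.
      rewrite <- (exp_ln eps) by lra. apply exp_increasing.
      assert ((p-1) * ln h < (p - 1) * c) by (apply Rmult_lt_compat_l; lra). lra.
Qed.

Lemma psi_deriv k b z : 1 < fst b ->
  cderiv (psi k b) z (Cplus (Cmult (Copp k) (psi k b z)) (Cmult b (psi k (Cminus b (RtoC 1)) z))).
Proof.
  intros Hb.
  destruct (Rlt_or_le 0 z) as [Hz|Hz]; [|destruct (Rlt_or_le z 0) as [Hz'|Hz']].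
  - rewrite (psi_pos k b z Hz), (psi_pos k _ z Hz).
    assert (Hloc : forall t, 0 < t -> psi k b t =
      (exp (fst k * (1-t) + fst b * ln t) * cos (snd k * (1-t) + snd b * ln t),
       exp (fst k * (1-t) + fst b * ln t) * sin (snd k * (1-t) + snd b * ln t))) by (intros; apply psi_pos; auto).
    assert (Hl : locally z (fun t => 0 < t)).
    { exists (mkposreal z Hz). intros y Hy. unfold ball in Hy; simpl in Hy; unfold AbsRing_ball, abs, minus, plus, opp in Hy; simpl in Hy.
      apply Rabs_lt_between in Hy. lra. }
    replace (fst (Cminus b (RtoC 1))) with (fst b - 1) by (destruct b; simpl; ring).
    replace (snd (Cminus b (RtoC 1))) with (snd b) by (destruct b; simpl; ring).
    replace (fst b - 1) with (fst b + - 1) by ring.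
    rewrite (Rmult_plus_distr_r (fst b) (-1) (ln z)).
    replace (fst k * (1 - z) + (fst b * ln z + -1 * ln z)) with
      ((fst k * (1 - z) + fst b * ln z) + - ln z) by ring.
    rewrite (exp_plus (fst k * (1 - z) + fst b * ln z)), exp_Ropp, exp_ln by exact Hz.
    split.
    + apply (is_derive_ext_loc (fun t => exp (fst k * (1-t) + fst b * ln t) * cos (snd k * (1-t) + snd b * ln t))).
      { eapply filter_imp; [|exact Hl]. intros t Ht. rewrite (Hloc t Ht). reflexivity. }
      destruct k as [k1 k2], b as [b1 b2]; simpl.
      auto_derive; [lra|]. replace (1 + - z) with (1 - z) by ring. field. lra.
    + apply (is_derive_ext_loc (fun t => exp (fst k * (1-t) + fst b * ln t) * sin (snd k * (1-t) + snd b * ln t))).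
      { eapply filter_imp; [|exact Hl]. intros t Ht. rewrite (Hloc t Ht). reflexivity. }
      destruct k as [k1 k2], b as [b1 b2]; simpl.
      auto_derive; [lra|]. replace (1 + - z) with (1 - z) by ring. field. lra.
  - rewrite !psi_nonpos by lra.
    assert (Hl : locally z (fun t => t < 0)).
    { assert (Hz2 : 0 < - z) by lra. exists (mkposreal (-z) Hz2). intros y Hy.
      unfold ball in Hy; simpl in Hy; unfold AbsRing_ball, abs, minus, plus, opp in Hy; simpl in Hy.
      apply Rabs_lt_between in Hy. lra. }
    split.
    + apply (is_derive_ext_loc (fun _ => 0)).
      { eapply filter_imp; [|exact Hl]. intros t Ht. rewrite (psi_nonpos k b t) by lra. simpl. reflexivity. }
      replace (fst _) with 0 by (simpl; ring). apply (is_derive_const (K:=R_AbsRing) (V:=R_NormedModule)).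
    + apply (is_derive_ext_loc (fun _ => 0)).
      { eapply filter_imp; [|exact Hl]. intros t Ht. rewrite (psi_nonpos k b t) by lra. simpl. reflexivity. }
      replace (snd _) with 0 by (simpl; ring). apply (is_derive_const (K:=R_AbsRing) (V:=R_NormedModule)).
  - assert (z = 0) by lra. subst z.
    rewrite !psi_nonpos by lra.
    split.
    + replace (fst _) with 0 by (simpl; ring).
      apply (deriv0 _ (fst k) (fst b) Hb).
      * intros h Hh. rewrite psi_nonpos by exact Hh. reflexivity.
      * intros h Hh. rewrite <- Cmod_psi by exact Hh. apply re_le_Cmod.
    + replace (snd _) with 0 by (simpl; ring).
      apply (deriv0 _ (fst k) (fst b) Hb).
      * intros h Hh. rewrite psi_nonpos by exact Hh. reflexivity.
      * intros h Hh. rewrite <- Cmod_psi by exact Hh. apply im_le_Cmod.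
Qed.

Definition cont01 (f : R -> C) := forall x, 0 <= x <= 1 ->
  continuous (fun t => fst (f t)) x /\ continuous (fun t => snd (f t)) x.

Lemma ex_RInt01 (g : R -> R) : (forall x, 0 <= x <= 1 -> continuous g x) -> ex_RInt g 0 1.
Proof.
  intros H. apply (ex_RInt_continuous (V:=R_CompleteNormedModule)). rewrite Rmin_left, Rmax_right by lra. exact H.
Qed.

Lemma CRInt_FTC (F f : R -> C) : (forall x, 0 <= x <= 1 -> cderiv F x (f x)) ->
  cont01 f -> CRInt f 0 1 = Cminus (F 1) (F 0).
Proof.
  intros HD HC. unfold CRInt, Re, Im. apply Ceq; simpl.
  - apply is_RInt_unique.
    apply (is_RInt_derive (fun t => fst (F t)) (fun t => fst (f t))).
    + rewrite Rmin_left, Rmax_right by lra. intros x Hx. apply (HD x Hx).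
    + rewrite Rmin_left, Rmax_right by lra. intros x Hx. apply (HC x Hx).
  - apply is_RInt_unique.
    apply (is_RInt_derive (fun t => snd (F t)) (fun t => snd (f t))).
    + rewrite Rmin_left, Rmax_right by lra. intros x Hx. apply (HD x Hx).
    + rewrite Rmin_left, Rmax_right by lra. intros x Hx. apply (HC x Hx).
Qed.

Lemma RInt_lin (u v : R -> R) a b : ex_RInt u 0 1 -> ex_RInt v 0 1 ->
  RInt (fun t => a * u t + b * v t) 0 1 = a * RInt u 0 1 + b * RInt v 0 1.
Proof.
  intros Hu Hv. apply (is_RInt_unique (V:=R_CompleteNormedModule)).
  apply (is_RInt_plus (V:=R_NormedModule) (fun t => a * u t) (fun t => b * v t)).
  - apply (is_RInt_scal (V:=R_NormedModule) u). apply (RInt_correct (V:=R_CompleteNormedModule)); auto.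
  - apply (is_RInt_scal (V:=R_NormedModule) v). apply (RInt_correct (V:=R_CompleteNormedModule)); auto.
Qed.

Lemma CRInt_plus f g : cont01 f -> cont01 g ->
  CRInt (fun t => Cplus (f t) (g t)) 0 1 = Cplus (CRInt f 0 1) (CRInt g 0 1).
Proof.
  intros Hf Hg. unfold CRInt, Re, Im. apply Ceq; simpl.
  - rewrite <- (Rmult_1_l (RInt (fun t => fst (f t)) 0 1)), <- (Rmult_1_l (RInt (fun t => fst (g t)) 0 1)).
    rewrite <- RInt_lin. apply RInt_ext. intros; simpl; ring.
    apply ex_RInt01; intros; apply Hf; auto. apply ex_RInt01; intros; apply Hg; auto.
  - rewrite <- (Rmult_1_l (RInt (fun t => snd (f t)) 0 1)), <- (Rmult_1_l (RInt (fun t => snd (g t)) 0 1)).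
    rewrite <- RInt_lin. apply RInt_ext. intros; simpl; ring.
    apply ex_RInt01; intros; apply Hf; auto. apply ex_RInt01; intros; apply Hg; auto.
Qed.

Lemma CRInt_scal (c : C) f : cont01 f ->
  CRInt (fun t => Cmult c (f t)) 0 1 = Cmult c (CRInt f 0 1).
Proof.
  intros Hf. unfold CRInt, Re, Im. destruct c as [c1 c2]. apply Ceq; simpl.
  - replace (c1 * RInt (fun t => fst (f t)) 0 1 - c2 * RInt (fun t => snd (f t)) 0 1)
      with (c1 * RInt (fun t => fst (f t)) 0 1 + (- c2) * RInt (fun t => snd (f t)) 0 1) by ring.
    rewrite <- RInt_lin. apply RInt_ext. intros; simpl; ring.
    apply ex_RInt01; intros; apply Hf; auto. apply ex_RInt01; intros; apply Hf; auto.
  - replace (c1 * RInt (fun t => snd (f t)) 0 1 + c2 * RInt (fun t => fst (f t)) 0 1)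
      with (c2 * RInt (fun t => fst (f t)) 0 1 + c1 * RInt (fun t => snd (f t)) 0 1) by ring.
    rewrite <- RInt_lin. apply RInt_ext. intros; simpl; ring.
    apply ex_RInt01; intros; apply Hf; auto. apply ex_RInt01; intros; apply Hf; auto.
Qed.

Lemma CRInt_bound f B : cont01 f -> (forall x, 0 <= x <= 1 -> Cmod (f x) <= B) ->
  Cmod (CRInt f 0 1) <= 2 * B.
Proof.
  intros Hf HB. eapply Rle_trans; [apply Cmod_le_sum|]. unfold CRInt, Re, Im; simpl.
  assert (H1 : Rabs (RInt (fun t => fst (f t)) 0 1) <= (1 - 0) * B).
  { apply abs_RInt_le_const. lra. apply ex_RInt01; intros; apply Hf; auto.
    intros t Ht. eapply Rle_trans; [apply re_le_Cmod|]. apply HB; auto. }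
  assert (H2 : Rabs (RInt (fun t => snd (f t)) 0 1) <= (1 - 0) * B).
  { apply abs_RInt_le_const. lra. apply ex_RInt01; intros; apply Hf; auto.
    intros t Ht. eapply Rle_trans; [apply im_le_Cmod|]. apply HB; auto. }
  lra.
Qed.

Lemma CRInt_ext f g : (forall x, 0 < x < 1 -> f x = g x) -> CRInt f 0 1 = CRInt g 0 1.
Proof.
  intros H. unfold CRInt, Re, Im. f_equal; apply RInt_ext; rewrite Rmin_left, Rmax_right by lra;
  intros x Hx; rewrite H; auto.
Qed.

Fixpoint pp (n : R) (a : C) (j : nat) (z : R) : C :=
  match j with
  | O => RtoC 1
  | S j' => Cminus (Cmult (Cminus (Cminus a (RtoC (INR j'))) (RtoC (n * z))) (pp n a j' z))
              (Cmult (RtoC (n * INR j' * z)) (match j' with O => RtoC 0 | S j'' => pp n a j'' z end))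
  end.

Definition ppm (n : R) (a : C) (j : nat) (z : R) : C :=
  match j with O => RtoC 0 | S j' => pp n a j' z end.

Lemma pp_S n a j z : pp n a (S j) z =
  Cminus (Cmult (Cminus (Cminus a (RtoC (INR j))) (RtoC (n * z))) (pp n a j z))
         (Cmult (RtoC (n * INR j * z)) (ppm n a j z)).
Proof. reflexivity. Qed.

Lemma cderiv_minus f g x a b : cderiv f x a -> cderiv g x b ->
  cderiv (fun t => Cminus (f t) (g t)) x (Cminus a b).
Proof. intros [H1 H2] [H3 H4]; split; simpl; apply isd_minus; auto. Qed.

Lemma cderiv_lin (al : R) x : cderiv (fun t => RtoC (al * t)) x (RtoC al).
Proof.
  split; simpl.
  - apply (isd_ext (fun t => al * t) _ _ (al * 1)); [intros; reflexivity| ring|].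
    apply (is_derive_scal (fun t => t)). apply (is_derive_id (K:=R_AbsRing)).
  - apply (is_derive_const (K:=R_AbsRing) (V:=R_NormedModule)).
Qed.

Lemma cderiv_scal (c : C) f x l : cderiv f x l -> cderiv (fun t => Cmult c (f t)) x (Cmult c l).
Proof.
  intros H. eapply cderiv_ext; [intros; reflexivity| |].
  2:{ apply cderiv_mult; [apply cderiv_const|exact H]. }
  apply Ceq; simpl; ring.
Qed.

Definition dpp (n : R) (a : C) (j : nat) (z : R) : C :=
  Cmult (RtoC (- (n * INR j))) (ppm n a j z).

Lemma pp_deriv n a j z : cderiv (pp n a j) z (dpp n a j z).
Proof.
  revert z.
  assert (H : forall j, (forall z, cderiv (pp n a j) z (dpp n a j z)) /\
                        (forall z, cderiv (pp n a (S j)) z (dpp n a (S j) z))).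
  { clear j. intros j. induction j as [|j [IH1 IH2]].
    - split; intros z.
      + eapply cderiv_ext; [intros; reflexivity| |apply cderiv_const].
        unfold dpp, ppm. apply Ceq; simpl; ring.
      + eapply cderiv_ext; [intros t; symmetry; apply pp_S| |].
        2:{ apply cderiv_minus; apply cderiv_mult.
            - apply cderiv_minus; [apply cderiv_const|apply cderiv_lin].
            - apply cderiv_const.
            - apply (cderiv_ext (fun t => RtoC ((n * INR 0) * t)) _ _ (RtoC (n * INR 0))); [intros; reflexivity|reflexivity|apply cderiv_lin].
            - apply cderiv_const. }
        unfold dpp, ppm; simpl. apply Ceq; simpl; ring.
    - split; [exact IH2|]. intros z.
      eapply cderiv_ext; [intros t; symmetry; apply pp_S| |].
      2:{ apply cderiv_minus; apply cderiv_mult.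
          - apply cderiv_minus; [apply cderiv_const|apply cderiv_lin].
          - apply IH2.
          - apply (cderiv_ext (fun t => RtoC ((n * INR (S j)) * t)) _ _ (RtoC (n * INR (S j)))); [intros; reflexivity|reflexivity|apply cderiv_lin].
          - apply IH1. }
      cbv beta. unfold dpp.
      change (ppm n a (S j) z) with (pp n a j z).
      change (ppm n a (S (S j)) z) with (pp n a (S j) z).
      rewrite (pp_S n a j z). rewrite !S_INR.
      set (P0 := pp n a j z). set (Pm := ppm n a j z).
      destruct a as [a1 a2], P0 as [q1 q2], Pm as [m1 m2].
      apply Ceq; simpl; ring. }
  intros z. apply (proj1 (H j)).
Qed.

Definition Yf (k a : C) (n : R) (j : nat) (z : R) : C :=
  Cmult (psi k (Cminus a (RtoC (INR j))) z) (pp n a j z).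

Lemma psi_ext k b1 b2 z : b1 = b2 -> psi k b1 z = psi k b2 z.
Proof. intros ->; reflexivity. Qed.

Lemma Y_deriv k a n j z : 1 < fst a - INR j ->
  cderiv (Yf k a n j) z (Cplus (Yf k a n (S j) z) (Cmult (Cminus (RtoC n) k) (Yf k a n j z))).
Proof.
  intros Ha. unfold Yf.
  eapply cderiv_ext; [intros; reflexivity| |].
  2:{ apply cderiv_mult; [apply psi_deriv|apply pp_deriv]. simpl. exact Ha. }
  rewrite (psi_shift k (Cminus a (RtoC (INR j))) z).
  rewrite (psi_ext k (Cminus a (RtoC (INR (S j)))) (Cminus (Cminus a (RtoC (INR j))) (RtoC 1)))
    by (rewrite S_INR; apply Ceq; simpl; ring).
  set (P := psi k (Cminus (Cminus a (RtoC (INR j))) (RtoC 1)) z).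
  rewrite pp_S. unfold dpp.
  set (p0 := pp n a j z). set (pm := ppm n a j z).
  destruct k as [k1 k2], a as [a1 a2], P as [P1 P2], p0 as [q1 q2], pm as [m1 m2].
  apply Ceq; simpl; ring.
Qed.

Lemma cderiv_cont01 f : (forall x, 0 <= x <= 1 -> exists l, cderiv f x l) -> cont01 f.
Proof. intros H x Hx. destruct (H x Hx) as [l Hl]. eapply cderiv_continuous; eauto. Qed.

Lemma Y_cont k a n j : 1 < fst a - INR j -> cont01 (Yf k a n j).
Proof. intros H. apply cderiv_cont01. intros x _. eexists. apply Y_deriv; auto. Qed.

Lemma Y_at1 k a n j : Yf k a n j 1 = pp n a j 1.
Proof. unfold Yf. rewrite psi_one. apply Ceq; simpl; ring. Qed.

Lemma Y_at0 k a n j : Yf k a n j 0 = RtoC 0.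
Proof. unfold Yf. rewrite psi_nonpos by lra. apply Ceq; simpl; ring. Qed.

Lemma IBP k a n j : 1 < fst a - INR (S j) ->
  pp n a j 1 = Cplus (CRInt (Yf k a n (S j)) 0 1)
                     (Cmult (Cminus (RtoC n) k) (CRInt (Yf k a n j) 0 1)).
Proof.
  intros Ha. assert (Ha' : 1 < fst a - INR j) by (rewrite S_INR in Ha; lra).
  rewrite <- CRInt_scal by (apply Y_cont; auto).
  rewrite <- CRInt_plus.
  2:{ apply Y_cont; auto. }
  2:{ apply cderiv_cont01. intros x _. eexists. apply cderiv_scal. apply Y_deriv; auto. }
  rewrite (CRInt_FTC (Yf k a n j)).
  - rewrite Y_at1, Y_at0. apply Ceq; simpl; ring.
  - intros x _. apply Y_deriv; auto.
  - apply cderiv_cont01. intros x _. eexists. apply cderiv_plus.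
    apply Y_deriv; auto. apply cderiv_scal. apply Y_deriv; auto.
Qed.

Lemma exp_mono x y : x <= y -> exp x <= exp y.
Proof. intros [H|H]; [left; apply exp_increasing; auto| subst; lra]. Qed.

Lemma exp_pow m x : exp (INR m * x) = exp x ^ m.
Proof.
  induction m as [|m IH].
  - simpl. rewrite Rmult_0_l, exp_0; reflexivity.
  - rewrite S_INR, Rmult_plus_distr_r, Rmult_1_l, exp_plus, IH. simpl. ring.
Qed.

Lemma ln_quad z : 0 < z <= 1 -> ln z <= -(1-z) - (1-z)^2/2.
Proof.
  intros Hz. destruct (Req_dec z 1) as [->|Hz1].
  - rewrite ln_1. lra.
  - assert (H := MVT_gen (fun t => ln t + (1-t) + (1-t)^2/2) z 1 (fun t => /t - 1 - (1-t))).
    cbv zeta in H. rewrite Rmin_left, Rmax_right in H by lra.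
    destruct H as [c [Hc Heq]].
    + intros x Hx. auto_derive. lra. field. lra.
    + intros x Hx. apply continuity_pt_filterlim.
      apply (ex_derive_continuous (K:=R_AbsRing) (V:=R_NormedModule) (fun t => ln t + (1-t) + (1-t)^2/2)). auto_derive. lra.
    + rewrite ln_1 in Heq.
      assert (Hc0 : 0 < c) by lra.
      assert (Hd : 0 <= / c - 1 - (1 - c)).
      { replace (/ c - 1 - (1 - c)) with ((1-c)^2 / c) by (field; lra).
        apply Rdiv_le_0_compat; [nra|lra]. }
      nra.
Qed.

Definition Dg (be : R) (M : nat) : R := (2 * be) ^ M + 2 ^ M * ((4 * INR M) ^ M + 1).

Lemma gauss s be M : 0 <= s -> 0 <= be -> (1 <= M)%nat ->
  (s + be) ^ M * exp (- (s^2/4)) <= Dg be M.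
Proof.
  intros Hs Hb HM. unfold Dg.
  assert (He1 : exp (- (s^2/4)) <= 1) by (rewrite <- exp_0; apply exp_mono; nra).
  assert (He0 : 0 < exp (- (s^2/4))) by apply exp_pos.
  assert (HM0 : 0 < INR M) by (apply lt_0_INR; lia).
  assert (P1 : 0 <= 2 ^ M * ((4 * INR M) ^ M + 1)).
  { apply Rmult_le_pos; [apply pow_le; lra|]. assert (0 <= (4 * INR M)^M) by (apply pow_le; lra). lra. }
  assert (P2 : 0 <= (2 * be) ^ M) by (apply pow_le; lra).
  destruct (Rle_lt_dec s be) as [H|H].
  - assert ((s + be) ^ M <= (2 * be) ^ M) by (apply pow_incr; lra).
    assert (0 <= (s + be) ^ M) by (apply pow_le; lra).
    nra.
  - assert (H1 : (s + be) ^ M <= 2 ^ M * s ^ M).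
    { rewrite <- Rpow_mult_distr. apply pow_incr; lra. }
    assert (H2 : s ^ M * exp (- (s^2/4)) <= (4 * INR M) ^ M + 1).
    { destruct (Rle_lt_dec s 1) as [Hs1|Hs1].
      - assert (s ^ M <= 1 ^ M) by (apply pow_incr; lra). rewrite pow1 in H0.
        assert (0 <= s^M) by (apply pow_le; lra).
        assert (0 <= (4 * INR M) ^ M) by (apply pow_le; lra). nra.
      - assert (Hx : exp (s^2/4) >= (s^2 / (4 * INR M)) ^ M).
        { replace (s^2/4) with (INR M * (s^2 / (4 * INR M))) by (field; lra).
          rewrite exp_pow. apply Rle_ge. apply pow_incr. split.
          apply Rdiv_le_0_compat; nra.
          assert (Hq := exp_ineq1 (s^2 / (4 * INR M))).
          assert (0 <= s^2 / (4 * INR M)) by (apply Rdiv_le_0_compat; nra).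
          destruct (Req_dec (s^2 / (4 * INR M)) 0) as [E|E]. rewrite E, exp_0. lra.
          assert (Hq0 : 0 < s^2 / (4 * INR M)) by lra. specialize (Hq E). lra. }
        assert (Hsm : s ^ M <= (s^2) ^ M).
        { apply pow_incr. split; [lra|nra]. }
        assert (Hdiv : (s^2) ^ M = (4 * INR M) ^ M * (s^2 / (4 * INR M)) ^ M).
        { rewrite <- Rpow_mult_distr. f_equal. field. lra. }
        assert (Hexp : exp (- (s^2/4)) = / exp (s^2/4)) by apply exp_Ropp.
        assert (Hpos : 0 < exp (s^2/4)) by apply exp_pos.
        assert (0 <= (4 * INR M) ^ M) by (apply pow_le; lra).
        assert (0 <= (s^2 / (4 * INR M)) ^ M) by (apply pow_le; apply Rdiv_le_0_compat; nra).
        rewrite Hexp.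
        apply Rle_trans with ((4 * INR M) ^ M).
        + apply Rle_trans with ((s^2)^M * / exp (s^2/4)).
          * apply Rmult_le_compat_r; [left; apply Rinv_0_lt_compat; lra|lra].
          * rewrite Hdiv. rewrite Rmult_assoc.
            rewrite <- (Rmult_1_r ((4 * INR M) ^ M)) at 2.
            apply Rmult_le_compat_l; [lra|].
            apply (Rmult_le_reg_r (exp (s^2/4))); [lra|].
            rewrite Rmult_assoc, Rinv_l, Rmult_1_r, Rmult_1_l by lra. lra.
        + lra. }
    assert (0 <= s ^ M) by (apply pow_le; lra).
    assert (0 <= 2 ^ M) by (apply pow_le; lra).
    apply Rle_trans with (2 ^ M * s ^ M * exp (- (s^2/4))).
    + apply Rmult_le_compat_r; lra.
    + rewrite Rmult_assoc. assert (2 ^ M * (s ^ M * exp (- (s ^ 2 / 4))) <= 2 ^ M * ((4 * INR M) ^ M + 1)) by (apply Rmult_le_compat_l; lra). lra.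
Qed.

Fixpoint cst (j : nat) : R :=
  match j with
  | O => 1
  | S j' => (INR j' + 1) * cst j' + INR j' * (match j' with O => 0 | S j'' => cst j'' end)
  end.

Lemma cst_pos j : 0 <= cst j.
Proof.
  assert (H : forall j, 0 <= cst j /\ 0 <= cst (S j)).
  { clear j; intros j; induction j as [|j [IH1 IH2]].
    - simpl. lra.
    - split; auto. change (cst (S (S j))) with ((INR (S j) + 1) * cst (S j) + INR (S j) * cst j).
      assert (0 <= INR (S j)) by apply pos_INR. nra. }
  apply H.
Qed.

Lemma Cmod_minus_le x y : Cmod (Cminus x y) <= Cmod x + Cmod y.
Proof.
  unfold Cminus. eapply Rle_trans; [apply Cmod_triangle|].
  replace (Cmod (Copp y)) with (Cmod y); [lra|].
  replace (Copp y) with (Cmult (RtoC (-1)) y) by (apply Ceq; simpl; ring).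
  rewrite Cmod_mult, Cmod_R. replace (Rabs (-1)) with 1 by (unfold Rabs; destruct Rcase_abs; lra). ring.
Qed.

Lemma pp_bound n v j z : 0 <= n -> 0 <= z <= 1 ->
  Cmod (pp n (Cplus (RtoC n) v) j z) <= cst j * (n*(1-z) + Cmod v + sqrt n + 1) ^ j.
Proof.
  intros Hn Hz.
  set (B := n*(1-z) + Cmod v + sqrt n + 1).
  assert (Hsq := sqrt_pos n). assert (Hv := Cmod_ge_0 v).
  assert (HB1 : 1 <= B) by (unfold B; nra).
  assert (HBn : n <= B ^ 2).
  { rewrite <- (pow2_sqrt n) by lra. apply pow_incr. unfold B; split; [lra|nra]. }
  assert (HX : forall j, Cmod (Cminus (Cminus (Cplus (RtoC n) v) (RtoC (INR j))) (RtoC (n * z))) <= B + INR j).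
  { intros i. replace (Cminus (Cminus (Cplus (RtoC n) v) (RtoC (INR i))) (RtoC (n * z)))
      with (Cplus (RtoC (n * (1-z) - INR i)) v) by (apply Ceq; simpl; ring).
    eapply Rle_trans; [apply Cmod_triangle|]. rewrite Cmod_R.
    assert (0 <= INR i) by apply pos_INR.
    assert (Rabs (n * (1 - z) - INR i) <= n * (1-z) + INR i).
    { apply Rabs_le. nra. }
    unfold B. lra. }
  assert (HY : forall j, Cmod (RtoC (n * INR j * z)) <= B^2 * INR j).
  { intros i. rewrite Cmod_R. assert (0 <= INR i) by apply pos_INR.
    rewrite Rabs_pos_eq by (apply Rmult_le_pos; [apply Rmult_le_pos|]; lra).
    assert (n * INR i * z <= n * INR i) by (assert (0 <= n * INR i) by nra; nra). nra. }
  assert (H : forall j, Cmod (pp n (Cplus (RtoC n) v) j z) <= cst j * B ^ j /\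
                        Cmod (pp n (Cplus (RtoC n) v) (S j) z) <= cst (S j) * B ^ (S j)).
  { clear j. intros j. induction j as [|j [IH1 IH2]].
    - split.
      + simpl. rewrite Cmod_1. lra.
      + rewrite pp_S. eapply Rle_trans; [apply Cmod_minus_le|]. rewrite !Cmod_mult.
        simpl ppm. rewrite Cmod_0. simpl pp. rewrite Cmod_1. specialize (HX 0%nat). simpl INR in *.
        simpl cst. nra.
    - split; [exact IH2|].
      rewrite pp_S. eapply Rle_trans; [apply Cmod_minus_le|]. rewrite !Cmod_mult.
      change (ppm n (Cplus (RtoC n) v) (S j) z) with (pp n (Cplus (RtoC n) v) j z).
      change (cst (S (S j))) with ((INR (S j) + 1) * cst (S j) + INR (S j) * cst j).
      specialize (HX (S j)). specialize (HY (S j)).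
      set (p1 := Cmod (pp n (Cplus (RtoC n) v) (S j) z)) in *.
      set (p0 := Cmod (pp n (Cplus (RtoC n) v) j z)) in *.
      assert (Hc0 := cst_pos j). assert (Hc1 := cst_pos (S j)).
      assert (HI := pos_INR (S j)).
      assert (HBj : 0 <= B ^ j) by (apply pow_le; lra).
      assert (Hp0 : 0 <= p0) by apply Cmod_ge_0. assert (Hp1 : 0 <= p1) by apply Cmod_ge_0.
      set (X := Cmod _) in HX. set (Y := Cmod _) in HY.
      assert (T1 : X * p1 <= (INR (S j) + 1) * B * (cst (S j) * B ^ (S j))).
      { apply Rle_trans with ((B + INR (S j)) * (cst (S j) * B ^ S j)).
        apply Rmult_le_compat; try lra. apply Cmod_ge_0.
        apply Rmult_le_compat_r. apply Rmult_le_pos; [lra|apply pow_le; lra]. nra. }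
      assert (T2 : Y * p0 <= B ^ 2 * INR (S j) * (cst j * B ^ j)).
      { apply Rmult_le_compat; try lra. apply Cmod_ge_0. }
      replace (B ^ S (S j)) with (B ^ 2 * B ^ j) by (simpl; ring).
      replace (B ^ S j) with (B * B ^ j) in T1 by (simpl; ring).
      eapply Rle_trans; [apply Rplus_le_compat; [exact T1|exact T2]|]. right; ring. }
  apply H.
Qed.

Lemma psi_mod_bound n w v M z : 0 <= n -> fst w <= 1 -> 2 * (INR M + Cmod v) <= n -> 0 < z <= 1 ->
  Cmod (psi (Cmult (RtoC n) w) (Cminus (Cplus (RtoC n) v) (RtoC (INR M))) z)
  <= exp (INR M + Cmod v - n * (1-z)^2/4).
Proof.
  intros Hn Hw HM Hz. rewrite Cmod_psi by lra. apply exp_mono. simpl.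
  assert (Hl := ln_quad z Hz).
  assert (Hl0 : ln z <= 0) by nra.
  assert (Hv : Rabs (fst v) <= Cmod v) by apply re_le_Cmod.
  assert (Hv' : - Cmod v <= fst v) by (assert (Hq := Rabs_maj2 (fst v)); lra).
  assert (HMp := pos_INR M).
  set (m0 := INR M + Cmod v) in *.
  assert (E1 : (n * fst w - 0 * snd w) * (1 - z) <= n * (1 - z)) by (replace ((n * fst w - 0 * snd w) * (1 - z)) with ((n*fst w) * (1-z)) by ring; apply Rmult_le_compat_r; nra).
  assert (E2 : (n + fst v - INR M) * ln z <= n * ln z - m0 * ln z) by (unfold m0 in *; nra).
  assert (E3 : (n - m0) * ((1 - z) + ln z) <= (n - m0) * (- (1-z)^2/2)) by (apply Rmult_le_compat_l; nra).
  assert (E4 : (n - m0) * (- (1-z)^2/2) <= - n * (1-z)^2/4 + 0) by (assert (0 <= (n - 2*m0) * (1-z)^2) by (apply Rmult_le_pos; nra); nra).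
  assert (0 <= m0) by (unfold m0; assert (Hcv := Cmod_ge_0 v); lra). assert (m0 * (1 - z) <= m0) by nra. lra.
Qed.

Definition Ycst (v : C) (M : nat) : R := cst M * exp (INR M + Cmod v) * Dg (Cmod v + 2) M.

Lemma Y_bound n w v M z : 1 <= n -> fst w <= 1 -> 2 * (INR M + Cmod v) <= n -> (1 <= M)%nat ->
  0 <= z <= 1 ->
  Cmod (Yf (Cmult (RtoC n) w) (Cplus (RtoC n) v) n M z) <= Ycst v M * sqrt n ^ M.
Proof.
  intros Hn Hw HM HM1 Hz.
  assert (Hc := cst_pos M). assert (Hv := Cmod_ge_0 v).
  assert (Hsq1 : 1 <= sqrt n) by (rewrite <- sqrt_1; apply sqrt_le_1_alt; lra).
  assert (HD : 0 <= Dg (Cmod v + 2) M).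
  { eapply Rle_trans; [|apply (gauss 0 (Cmod v + 2) M); [lra|lra|exact HM1]].
    apply Rmult_le_pos; [apply pow_le; lra| left; apply exp_pos]. }
  assert (HYc : 0 <= Ycst v M * sqrt n ^ M).
  { unfold Ycst. repeat apply Rmult_le_pos; try lra. left; apply exp_pos. apply pow_le; lra. }
  destruct (Req_dec z 0) as [->|Hz0].
  - rewrite Y_at0, Cmod_0. exact HYc.
  - unfold Yf. rewrite Cmod_mult.
    assert (H1 := psi_mod_bound n w v M z ltac:(lra) Hw HM ltac:(lra)).
    assert (H2 := pp_bound n v M z ltac:(lra) Hz).
    set (s := sqrt n * (1 - z)).
    assert (Hs : 0 <= s) by (unfold s; apply Rmult_le_pos; lra).
    assert (Hss : s ^ 2 = n * (1-z)^2).
    { unfold s. rewrite Rpow_mult_distr, pow2_sqrt by lra. reflexivity. }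
    assert (HB : n * (1 - z) + Cmod v + sqrt n + 1 <= sqrt n * (s + (Cmod v + 2))).
    { unfold s. replace (n * (1-z)) with (sqrt n * (sqrt n * (1 - z))).
      2:{ rewrite <- Rmult_assoc, sqrt_sqrt by lra. reflexivity. }
      assert (0 <= sqrt n * (1-z)) by (apply Rmult_le_pos; lra). nra. }
    assert (HBM : (n * (1 - z) + Cmod v + sqrt n + 1) ^ M <= sqrt n ^ M * (s + (Cmod v + 2)) ^ M).
    { rewrite <- Rpow_mult_distr. apply pow_incr. split; [|exact HB].
      assert (0 <= n * (1-z)) by nra. lra. }
    assert (HG := gauss s (Cmod v + 2) M Hs ltac:(lra) HM1).
    rewrite Hss in HG.
    replace (exp (INR M + Cmod v - n * (1 - z) ^ 2 / 4)) with
      (exp (INR M + Cmod v) * exp (- (n * (1 - z) ^ 2 / 4))) in H1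
      by (rewrite <- exp_plus; f_equal; ring).
    set (E0 := exp (INR M + Cmod v)) in *.
    set (E1 := exp (- (n * (1 - z) ^ 2 / 4))) in *.
    set (P := Cmod (psi _ _ z)) in *.
    set (Q := Cmod (pp _ _ _ _)) in *.
    assert (HE0 : 0 < E0) by apply exp_pos. assert (HE1 : 0 < E1) by apply exp_pos.
    assert (HP : 0 <= P) by apply Cmod_ge_0. assert (HQ : 0 <= Q) by apply Cmod_ge_0.
    set (G := (s + (Cmod v + 2)) ^ M) in *.
    set (Sn := sqrt n ^ M) in *.
    assert (HSn : 0 <= Sn) by (apply pow_le; lra).
    assert (HG0 : 0 <= G) by (apply pow_le; lra).
    unfold Ycst.
    apply Rle_trans with ((E0 * E1) * (cst M * (Sn * G))).
    + apply Rmult_le_compat; try assumption.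
      eapply Rle_trans; [exact H2|]. apply Rmult_le_compat_l; [lra|exact HBM].
    + assert (cst M * E0 * Sn * (G * E1) <= cst M * E0 * Sn * Dg (Cmod v + 2) M)
        by (apply Rmult_le_compat_l; [repeat apply Rmult_le_pos; lra | exact HG]).
      change (exp (INR M + Cmod v)) with E0. lra.
Qed.

Lemma Cmod_Cpow c m : Cmod (Cpow c m) = Cmod c ^ m.
Proof. induction m; simpl. apply Cmod_1. rewrite Cmod_mult, IHm. reflexivity. Qed.

Lemma Cpow_nz c m : c <> RtoC 0 -> Cpow c m <> RtoC 0.
Proof.
  intros Hc H. assert (H0 : Cmod (Cpow c m) = 0) by (rewrite H; apply Cmod_0).
  rewrite Cmod_Cpow in H0. revert H0. apply pow_nonzero. intros H1. apply Hc. apply Cmod_eq_0. exact H1.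
Qed.

Definition kk (n : R) (w : C) : C := Cmult (RtoC n) w.
Definition aa (n : R) (v : C) : C := Cplus (RtoC n) v.
Definition cc0 (n : R) (w : C) : C := Cminus (RtoC n) (kk n w).
Definition KK (n : R) (w v : C) (j : nat) : C := CRInt (Yf (kk n w) (aa n v) n j) 0 1.
Definition gg (n : R) (v : C) (j : nat) : C := pp n (aa n v) j 1.

Lemma chain n w v M : cc0 n w <> RtoC 0 -> 1 < fst (aa n v) - INR M ->
  KK n w v 0 = Cplus (csum (fun j => Cdiv (Cmult (RtoC ((-1)^j)) (gg n v j)) (Cpow (cc0 n w) (S j))) M)
                     (Cdiv (Cmult (RtoC ((-1)^M)) (KK n w v M)) (Cpow (cc0 n w) M)).
Proof.
  intros Hc. induction M as [|M IH]; intros HM.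
  - simpl. field.
  - assert (HM' : 1 < fst (aa n v) - INR M) by (rewrite S_INR in HM; lra).
    rewrite (IH HM'). simpl csum.
    assert (HI := IBP (kk n w) (aa n v) n M HM).
    fold (KK n w v (S M)) in HI. fold (KK n w v M) in HI. fold (gg n v M) in HI.
    change (Cminus (RtoC n) (kk n w)) with (cc0 n w) in HI.
    assert (Hk : KK n w v M = Cdiv (Cminus (gg n v M) (KK n w v (S M))) (cc0 n w)).
    { rewrite HI. field. exact Hc. }
    rewrite Hk. assert (Hp := Cpow_nz (cc0 n w) M Hc).
    change (Cpow (cc0 n w) (S M)) with (Cmult (cc0 n w) (Cpow (cc0 n w) M)).
    change ((-1) ^ S M) with ((-1) * (-1) ^ M).
    rewrite RtoC_mult. field. split; auto.
Qed.

Lemma S_repr n w v : S_fun n w v = Cplus (RtoC 1) (Cmult (kk n w) (KK n w v 0)).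
Proof.
  unfold S_fun, KK. f_equal. f_equal. apply CRInt_ext. intros x _.
  unfold Yf. change (pp n (aa n v) 0 x) with (RtoC 1).
  rewrite (psi_ext _ _ (aa n v)) by (apply Ceq; simpl; ring).
  unfold psi, aa, kk.
  set (T := Cmult _ _). destruct T. apply Ceq; simpl; ring.
Qed.

Lemma csum_ext f g n : (forall i, (i < n)%nat -> f i = g i) -> csum f n = csum g n.
Proof.
  induction n; intros H; simpl; auto.
  rewrite IHn by (intros; apply H; lia). rewrite H by lia. reflexivity.
Qed.

Lemma csum_plus f g n : csum (fun i => Cplus (f i) (g i)) n = Cplus (csum f n) (csum g n).
Proof. induction n; simpl. apply Ceq; simpl; ring. rewrite IHn. ring. Qed.

Lemma csum_scal c f n : csum (fun i => Cmult c (f i)) n = Cmult c (csum f n).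
Proof. induction n; simpl. apply Ceq; simpl; ring. rewrite IHn. ring. Qed.

Lemma csum_opp f n : csum (fun i => Copp (f i)) n = Copp (csum f n).
Proof. induction n; simpl. apply Ceq; simpl; ring. rewrite IHn. ring. Qed.

Lemma csum_zero f n : (forall i, (i < n)%nat -> f i = RtoC 0) -> csum f n = RtoC 0.
Proof.
  induction n; intros H; simpl; auto.
  rewrite IHn by (intros; apply H; lia). rewrite H by lia. ring.
Qed.

Lemma csum_front f n : csum f (S n) = Cplus (f 0%nat) (csum (fun i => f (S i)) n).
Proof.
  induction n. simpl. ring.
  change (csum f (S (S n))) with (Cplus (csum f (S n)) (f (S n))). rewrite IHn. simpl. ring.
Qed.

Lemma csum_split f m p : csum f (m + p) = Cplus (csum f m) (csum (fun i => f (m + i)%nat) p).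
Proof.
  induction p. rewrite Nat.add_0_r. simpl. ring.
  rewrite Nat.add_succ_r. simpl. rewrite IHp. ring.
Qed.

Lemma csum_swap (f : nat -> nat -> C) m p :
  csum (fun i => csum (fun j => f i j) p) m = csum (fun j => csum (fun i => f i j) m) p.
Proof.
  induction m; simpl.
  - symmetry. apply csum_zero. intros; reflexivity.
  - rewrite IHm. rewrite <- csum_plus. reflexivity.
Qed.

Lemma RtoC_rsum f n : RtoC (rsum f n) = csum (fun i => RtoC (f i)) n.
Proof. induction n; simpl. reflexivity. rewrite <- IHn. apply RtoC_plus. Qed.

Lemma RtoC_neq x : x <> 0 -> RtoC x <> RtoC 0.
Proof. intros H H'. apply H. injection H'. auto. Qed.

(* formal power series *)
Definition conv (f g : nat -> C) (N : nat) : C :=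
  csum (fun i => Cmult (f i) (g (N - i)%nat)) (S N).
Definition Dop (f : nat -> C) (N : nat) : C :=
  Cminus (Cmult (Cplus (RtoC (INR N)) (RtoC 1)) (f (S N))) (Cmult (RtoC (INR N)) (f N)).
Definition shift (f : nat -> C) (N : nat) : C :=
  match N with O => RtoC 0 | S N' => f N' end.

Lemma conv_ext f f' g g' N : (forall i, f i = f' i) -> (forall i, g i = g' i) -> conv f g N = conv f' g' N.
Proof. intros H1 H2. unfold conv. apply csum_ext. intros. rewrite H1, H2. reflexivity. Qed.

Lemma conv_scal_l c f g N : conv (fun i => Cmult c (f i)) g N = Cmult c (conv f g N).
Proof. unfold conv. rewrite <- csum_scal. apply csum_ext. intros. ring. Qed.

Lemma conv_scal_r c f g N : conv f (fun i => Cmult c (g i)) N = Cmult c (conv f g N).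
Proof. unfold conv. rewrite <- csum_scal. apply csum_ext. intros. ring. Qed.

Lemma conv_shift_l f g N : conv (shift f) g N = shift (conv f g) N.
Proof.
  destruct N as [|N]; unfold conv; rewrite csum_front; simpl.
  - apply Ceq; simpl; ring.
  - ring.
Qed.

Lemma conv_shift_r f g N : conv f (shift g) N = shift (conv f g) N.
Proof.
  destruct N as [|N]; unfold conv.
  - simpl. apply Ceq; simpl; ring.
  - change (csum (fun i => Cmult (f i) (shift g (S N - i))) (S (S N))) with
      (Cplus (csum (fun i => Cmult (f i) (shift g (S N - i))) (S N)) (Cmult (f (S N)) (shift g (S N - S N)))).
    rewrite Nat.sub_diag. simpl shift at 2.
    replace (csum (fun i => Cmult (f i) (shift g (S N - i))) (S N)) with
      (csum (fun i => Cmult (f i) (g (N - i)%nat)) (S N)).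
    + simpl shift. apply Ceq; simpl; ring.
    + apply csum_ext. intros i Hi. replace (S N - i)%nat with (S (N - i)) by lia. reflexivity.
Qed.

Definition e0 (N : nat) : C := match N with O => RtoC 1 | S _ => RtoC 0 end.

Lemma conv_e0_l g N : conv e0 g N = g N.
Proof.
  unfold conv. rewrite csum_front. rewrite Nat.sub_0_r.
  rewrite csum_zero by (intros; simpl; ring). simpl. ring.
Qed.

Lemma conv_D f g N : Dop (conv f g) N = Cplus (conv (Dop f) g N) (conv f (Dop g) N).
Proof.
  set (Z := fun i => Cminus (Cplus (Cmult (Cplus (RtoC (INR i)) (RtoC 1)) (Cmult (f (S i)) (g (N - i)%nat)))
                             (Cmult (Cminus (Cplus (RtoC (INR N)) (RtoC 1)) (RtoC (INR i))) (Cmult (f i) (g (S N - i)%nat))))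
                      (Cmult (RtoC (INR N)) (Cmult (f i) (g (N - i)%nat)))).
  transitivity (csum Z (S N)).
  - unfold Dop, conv.
    set (h := fun i => Cmult (f i) (g (S N - i)%nat)).
    assert (E1 : Cmult (Cplus (RtoC (INR N)) (RtoC 1)) (csum h (S (S N))) =
      Cplus (csum (fun i => Cmult (RtoC (INR i)) (h i)) (S (S N)))
            (csum (fun i => Cmult (Cminus (Cplus (RtoC (INR N)) (RtoC 1)) (RtoC (INR i))) (h i)) (S (S N)))).
    { rewrite <- csum_plus, <- csum_scal. apply csum_ext. intros; ring. }
    assert (E2 : csum (fun i => Cmult (RtoC (INR i)) (h i)) (S (S N)) =
                 csum (fun i => Cmult (Cplus (RtoC (INR i)) (RtoC 1)) (Cmult (f (S i)) (g (N - i)%nat))) (S N)).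
    { rewrite csum_front. simpl INR at 1. unfold h.
      replace (Cmult (RtoC 0) (Cmult (f 0%nat) (g (S N - 0)%nat))) with (RtoC 0) by ring.
      rewrite Cplus_0_l. apply csum_ext. intros i Hi. rewrite S_INR, RtoC_plus. reflexivity. }
    assert (E3 : csum (fun i => Cmult (Cminus (Cplus (RtoC (INR N)) (RtoC 1)) (RtoC (INR i))) (h i)) (S (S N)) =
                 csum (fun i => Cmult (Cminus (Cplus (RtoC (INR N)) (RtoC 1)) (RtoC (INR i))) (h i)) (S N)).
    { change (csum ?F (S (S N))) with (Cplus (csum F (S N)) (F (S N))).
      cbv beta. rewrite S_INR, RtoC_plus. ring. }
    change (csum (fun i => Cmult (f i) (g (S N - i)%nat)) (S (S N))) with (csum h (S (S N))).
    rewrite E1, E2, E3.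
    rewrite <- csum_scal. unfold Cminus at 1. rewrite <- csum_opp. rewrite <- !csum_plus.
    apply csum_ext. intros i Hi. unfold Z, h. ring.
  - unfold conv. rewrite <- csum_plus. apply csum_ext. intros i Hi.
    unfold Z, Dop. replace (S N - i)%nat with (S (N - i)) by lia.
    rewrite minus_INR by lia. rewrite RtoC_minus. ring.
Qed.

Definition qq (N : nat) : C := if (N <=? 1)%nat then RtoC 0 else RtoC (/ INR N).

Lemma Dop_qq N : Dop qq N = shift e0 N.
Proof.
  unfold Dop, qq. destruct N as [|[|N]].
  - simpl. apply Ceq; simpl; ring.
  - simpl. apply Ceq; simpl; field.
  - simpl Nat.leb. cbv iota. simpl shift. simpl e0.
    rewrite !S_INR. assert (H := pos_INR N).
    apply Ceq; simpl; field; lra.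
Qed.

Fixpoint bb (k N : nat) : C :=
  match k with O => e0 N | S k' => conv qq (bb k') N end.

Lemma Dop_ext f g N : (forall i, f i = g i) -> Dop f N = Dop g N.
Proof. intros H. unfold Dop. rewrite !H. reflexivity. Qed.

Lemma Dop_bb k N : Dop (bb (S k)) N = Cmult (RtoC (INR (S k))) (shift (bb k) N).
Proof.
  revert N. induction k as [|k IH]; intros N.
  - change (Dop (fun N => conv qq (bb 0) N) N = Cmult (RtoC (INR 1)) (shift (bb 0) N)).
    rewrite conv_D.
    rewrite (conv_ext (Dop qq) (shift e0) (bb 0) (bb 0)) by (auto using Dop_qq).
    rewrite conv_shift_l.
    rewrite (conv_ext qq qq (Dop (bb 0)) (fun i => Cmult (RtoC 0) (e0 i))).
    2: reflexivity.
    2:{ intros i. unfold Dop. destruct i; simpl; apply Ceq; simpl; ring. }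
    rewrite conv_scal_r. destruct N; simpl shift. apply Ceq; simpl; ring.
    rewrite conv_e0_l. simpl. apply Ceq; simpl; ring.
  - change (Dop (fun N => conv qq (bb (S k)) N) N = Cmult (RtoC (INR (S (S k)))) (shift (bb (S k)) N)).
    rewrite conv_D.
    rewrite (conv_ext (Dop qq) (shift e0) (bb (S k)) (bb (S k))) by (auto using Dop_qq).
    rewrite conv_shift_l.
    rewrite (conv_ext qq qq (Dop (bb (S k))) (fun i => Cmult (RtoC (INR (S k))) (shift (bb k) i))) by auto.
    rewrite conv_scal_r, conv_shift_r.
    destruct N; simpl shift.
    + apply Ceq; simpl; ring.
    + rewrite conv_e0_l. change (conv qq (bb k) N) with (bb (S k) N).
      rewrite (S_INR (S k)), RtoC_plus. ring.
Qed.

Definition beta (v : C) (N : nat) : C := Cmult (RtoC ((-1) ^ N)) (cbinom v N).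

Lemma Dop_beta v N : Dop (beta v) N = Cmult (Copp v) (beta v N).
Proof.
  unfold Dop, beta, cbinom. simpl cfalling. 
  change (Factorial.fact (S N)) with (S N * Factorial.fact N)%nat.
  rewrite mult_INR, S_INR.
  assert (HF := INR_fact_neq_0 N). assert (HN := pos_INR N).
  change ((-1) ^ S N) with ((-1) * (-1) ^ N).
  rewrite !RtoC_mult, RtoC_plus.
  field. split; try rewrite <- RtoC_plus; apply RtoC_neq; lra.
Qed.

Definition EE (v : C) (k N : nat) : C := conv (bb k) (beta v) N.

Lemma Dop_EE0 v N : Dop (EE v 0) N = Cmult (Copp v) (EE v 0 N).
Proof.
  unfold EE. rewrite conv_D.
  rewrite (conv_ext (Dop (bb 0)) (fun i => Cmult (RtoC 0) (e0 i)) (beta v) (beta v)).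
  2:{ intros i. unfold Dop. destruct i; simpl; apply Ceq; simpl; ring. }
  2: reflexivity.
  rewrite conv_scal_l.
  rewrite (conv_ext (bb 0) (bb 0) (Dop (beta v)) (fun i => Cmult (Copp v) (beta v i))) by (auto using Dop_beta).
  rewrite conv_scal_r. ring.
Qed.

Lemma Dop_EES v k N : Dop (EE v (S k)) N =
  Cminus (Cmult (RtoC (INR (S k))) (shift (EE v k) N)) (Cmult v (EE v (S k) N)).
Proof.
  unfold EE. rewrite conv_D.
  rewrite (conv_ext (Dop (bb (S k))) (fun i => Cmult (RtoC (INR (S k))) (shift (bb k) i)) (beta v) (beta v))
    by (auto using Dop_bb).
  rewrite conv_scal_l, conv_shift_l.
  rewrite (conv_ext (bb (S k)) (bb (S k)) (Dop (beta v)) (fun i => Cmult (Copp v) (beta v i))) by (auto using Dop_beta).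
  rewrite conv_scal_r. change (fun N0 => conv (bb k) (beta v) N0) with (conv (bb k) (beta v)). ring.
Qed.

Lemma bb_low k N : (N < 2 * k)%nat -> bb k N = RtoC 0.
Proof.
  revert N. induction k as [|k IH]; intros N HN; [lia|].
  simpl bb. unfold conv. apply csum_zero. intros i Hi.
  unfold qq. destruct (i <=? 1)%nat eqn:E.
  - ring.
  - apply Nat.leb_gt in E. rewrite IH by lia. ring.
Qed.

Lemma EE_low v k N : (N < 2 * k)%nat -> EE v k N = RtoC 0.
Proof.
  intros HN. unfold EE, conv. apply csum_zero. intros i Hi. rewrite bb_low by lia. ring.
Qed.

Lemma pS x n : x ^ S n = x * x ^ n.
Proof. reflexivity. Qed.

Lemma factS n : INR (Factorial.fact (S n)) = (INR n + 1) * INR (Factorial.fact n).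
Proof. change (Factorial.fact (S n)) with (S n * Factorial.fact n)%nat. rewrite mult_INR, S_INR. reflexivity. Qed.

Definition TT (v : C) (j k : nat) : C :=
  Cmult (Cmult (RtoC ((-1) ^ (j + k))) (Cdiv (RtoC (INR (Factorial.fact j))) (RtoC (INR (Factorial.fact k)))))
        (EE v k j).

Lemma fact_nz k : RtoC (INR (Factorial.fact k)) <> RtoC 0.
Proof. apply RtoC_neq. apply INR_fact_neq_0. Qed.

Lemma INR1_nz j : Cplus (RtoC (INR j)) (RtoC 1) <> RtoC 0.
Proof. rewrite <- RtoC_plus. apply RtoC_neq. assert (H := pos_INR j). lra. Qed.

Lemma RtoC_m1 : RtoC (-1) = Copp (RtoC 1).
Proof. apply Ceq; simpl; ring. Qed.

Lemma TT_rec0 v j : TT v (S j) 0 = Cmult (Cminus v (RtoC (INR j))) (TT v j 0).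
Proof.
  assert (H := Dop_EE0 v j). unfold Dop in H.
  assert (E : EE v 0 (S j) = Cdiv (Cplus (Cmult (RtoC (INR j)) (EE v 0 j)) (Cmult (Copp v) (EE v 0 j)))
                                  (Cplus (RtoC (INR j)) (RtoC 1))).
  { assert (HN := INR1_nz j). rewrite <- H. field. exact HN. }
  unfold TT. rewrite E. rewrite !Nat.add_0_r. rewrite pS, factS, !RtoC_mult, RtoC_plus.
  assert (HN := INR1_nz j). assert (HF := fact_nz 0).
  field. split; auto.
Qed.

Definition TTm (v : C) (j k : nat) : C := match j with O => RtoC 0 | S j' => TT v j' k end.

Lemma TT_recS v j k : TT v (S j) (S k) =
  Cminus (Cmult (Cminus v (RtoC (INR j))) (TT v j (S k))) (Cmult (RtoC (INR j)) (TTm v j k)).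
Proof.
  assert (H := Dop_EES v k j). unfold Dop in H.
  assert (E : EE v (S k) (S j) = Cdiv (Cplus (Cmult (RtoC (INR j)) (EE v (S k) j))
        (Cminus (Cmult (RtoC (INR (S k))) (shift (EE v k) j)) (Cmult v (EE v (S k) j))))
                                  (Cplus (RtoC (INR j)) (RtoC 1))).
  { assert (HN := INR1_nz j). rewrite <- H. field. exact HN. }
  unfold TT at 1. rewrite E. unfold TT.
  assert (HN := INR1_nz j). assert (HF := fact_nz k). assert (HFj := fact_nz j).
  destruct j as [|j].
  - simpl shift. simpl TTm. rewrite !Nat.add_0_l.
    replace (1 + S k)%nat with (S (S k)) by lia. rewrite !pS. rewrite (factS k).
    simpl (Factorial.fact 1). simpl (Factorial.fact 0). rewrite S_INR. simpl INR.
    rewrite !RtoC_mult, !RtoC_plus.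
    assert (HK := INR1_nz k). field. repeat split; auto.
  - simpl shift. simpl TTm. unfold TT.
    replace (S (S j) + S k)%nat with (S (S (S (j + k)))) by lia.
    replace (S j + S k)%nat with (S (S (j + k))) by lia.
    rewrite !pS. rewrite (factS (S j)), (factS j), (factS k), !S_INR.
    rewrite !RtoC_mult, !RtoC_plus, !RtoC_m1.
    assert (HK := INR1_nz k). assert (HF0 := fact_nz j).
    assert (HJ := INR1_nz j).
    assert (HJ2 : Cplus (Cplus (RtoC (INR j)) (RtoC 1)) (RtoC 1) <> RtoC 0).
    { rewrite <- !RtoC_plus. apply RtoC_neq. assert (H0 := pos_INR j). lra. }
    field. repeat split; assumption.
Qed.

Fixpoint ccf (v : C) (j r : nat) : C :=
  match j with
  | O => match r with O => RtoC 1 | S _ => RtoC 0 end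
  | S j' => match r with
            | O => RtoC 0
            | S r' => Cminus (Cmult (Cminus v (RtoC (INR j'))) (ccf v j' r'))
                        (Cmult (RtoC (INR j')) (match j' with O => RtoC 0 | S j'' => ccf v j'' r' end))
            end
  end.

Definition ccfm (v : C) (j r : nat) : C := match j with O => RtoC 0 | S j' => ccf v j' r end.

Lemma ccf_SS v j r : ccf v (S j) (S r) =
  Cminus (Cmult (Cminus v (RtoC (INR j))) (ccf v j r)) (Cmult (RtoC (INR j)) (ccfm v j r)).
Proof. reflexivity. Qed.

Lemma ccf_high v j r : (j < r)%nat -> ccf v j r = RtoC 0.
Proof.
  assert (H : forall j, (forall r, (j < r)%nat -> ccf v j r = RtoC 0) /\
                        (forall r, (S j < r)%nat -> ccf v (S j) r = RtoC 0)).
  { clear j r. intros j. induction j as [|j [IH1 IH2]].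
    - split.
      + intros [|r] H; [lia|reflexivity].
      + intros [|r] H; [lia|]. rewrite ccf_SS. simpl ccfm. destruct r as [|r]; [lia|]. simpl ccf. ring.
    - split; [exact IH2|].
      intros [|r] H; [lia|]. rewrite ccf_SS. simpl ccfm.
      rewrite IH2 by lia. rewrite IH1 by lia. ring. }
  apply H.
Qed.

Lemma TT_low v j k : (j < 2 * k)%nat -> TT v j k = RtoC 0.
Proof. intros H. unfold TT. rewrite EE_low by exact H. ring. Qed.

Lemma TT00 v : TT v 0 0 = RtoC 1.
Proof.
  unfold TT, EE, conv, beta, cbinom. simpl. apply Ceq; simpl; field.
Qed.

Definition Qc (v : C) (j : nat) := forall r, (r <= j)%nat -> ccf v j r = TT v j (j - r).
Definition Qm (v : C) (j : nat) := match j with O => True | S j' => Qc v j' end.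

Lemma Q_step v j : Qc v j -> Qm v j -> Qc v (S j).
Proof.
  intros IH IHm [|r] Hr.
  - simpl ccf. rewrite Nat.sub_0_r. rewrite TT_low by lia. reflexivity.
  - rewrite ccf_SS. rewrite (IH r) by lia. simpl (S j - S r)%nat.
    destruct (j - r)%nat as [|k] eqn:Ejr.
    + rewrite TT_rec0. destruct j as [|j'].
      * simpl. ring.
      * simpl ccfm. rewrite ccf_high by lia. ring.
    + rewrite TT_recS. destruct j as [|j'].
      * lia.
      * simpl ccfm. simpl TTm. simpl in IHm. rewrite (IHm r) by lia.
        replace (j' - r)%nat with k by lia. reflexivity.
Qed.

Lemma ccf_TT v j r : (r <= j)%nat -> ccf v j r = TT v j (j - r).
Proof.
  assert (H : forall j, Qc v j /\ Qc v (S j)).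
  { clear j r. intros j. induction j as [|j [IH1 IH2]].
    - assert (H0 : Qc v 0).
      { intros r Hr. assert (r = 0%nat) by lia. subst r. simpl. rewrite TT00. reflexivity. }
      split; auto. apply Q_step; simpl; auto.
    - split; auto. apply Q_step; simpl; auto. }
  intros Hr. apply H; auto.
Qed.

Lemma rsum_zero f n : (forall i, (i < n)%nat -> f i = 0) -> rsum f n = 0.
Proof.
  induction n; intros H; simpl; auto.
  rewrite IHn by (intros; apply H; lia). rewrite H by lia. ring.
Qed.

Lemma dm_low a m k : (m < k)%nat -> deMoivre a m k = 0.
Proof.
  revert m. induction k as [|k IH]; intros m Hm; [lia|].
  simpl. apply rsum_zero. intros i Hi. rewrite IH by lia. ring.
Qed.

Lemma qq0 : qq 0 = RtoC 0. Proof. reflexivity. Qed.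
Lemma qq1 : qq 1 = RtoC 0. Proof. reflexivity. Qed.
Lemma qqSS i : qq (S (S i)) = RtoC (harm_seq (S i)). Proof. reflexivity. Qed.

Lemma bb_dm k m : bb k (k + m) = RtoC (deMoivre harm_seq m k).
Proof.
  revert m. induction k as [|k IH]; intros m.
  - simpl. destruct m; reflexivity.
  - simpl bb. unfold conv.
    rewrite !csum_front. rewrite qq0, qq1.
    assert (Hs : forall f, csum f (k + m) = Cplus (csum f m) (csum (fun i => f (m + i)%nat) k)).
    { intros f. rewrite Nat.add_comm. apply csum_split. }
    rewrite Hs.
    rewrite (csum_zero (fun i => Cmult (qq (S (S (m + i)))) (bb k (S (k + m) - S (S (m + i)))))).
    2:{ intros i Hi. rewrite bb_low by lia. ring. }
    simpl deMoivre. rewrite RtoC_rsum.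
    replace (csum (fun i => Cmult (qq (S (S i))) (bb k (S (k + m) - S (S i)))) m) with
      (csum (fun i => RtoC (harm_seq (S i) * deMoivre harm_seq (m - S i) k)) m).
    + ring.
    + apply csum_ext. intros i Hi. rewrite qqSS, RtoC_mult.
      replace (S (k + m) - S (S i))%nat with (k + (m - S i))%nat by lia. rewrite IH. reflexivity.
Qed.

Lemma TT_expand v r k : TT v (r + k) k =
  Cmult (Cmult (RtoC ((-1) ^ (r + k + k))) (Cdiv (RtoC (INR (Factorial.fact (r + k)))) (RtoC (INR (Factorial.fact k)))))
        (csum (fun m => Cmult (RtoC (deMoivre harm_seq m k)) (beta v (r - m))) (S r)).
Proof.
  unfold TT. f_equal. unfold EE, conv.
  replace (S (r + k)) with (k + S r)%nat by lia. rewrite csum_split.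
  rewrite csum_zero by (intros i Hi; rewrite bb_low by lia; ring).
  rewrite Cplus_0_l. apply csum_ext. intros i Hi.
  rewrite bb_dm. replace (r + k - (k + i))%nat with (r - i)%nat by lia. reflexivity.
Qed.

Definition FF (v w : C) (j r : nat) : C :=
  Cdiv (Cmult (Cmult (RtoC ((-1) ^ j)) w) (ccf v j r)) (Cpow (Cminus (RtoC 1) w) (S j)).

Lemma m1sq n : (-1) ^ n * (-1) ^ n = 1.
Proof. rewrite <- Rpow_mult_distr. replace (-1 * -1) with 1 by ring. apply pow1. Qed.

Lemma m1nz n : (-1) ^ n <> 0.
Proof. apply pow_nonzero. lra. Qed.

Lemma sign_id r m k : (m <= r)%nat ->
  (-1) ^ (r - m) = - (-1) ^ m * (-1) ^ (S (r + k)) / ((-1) ^ (r + k) * (-1) ^ (r + k + k)).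
Proof.
  intros Hm. replace r with (m + (r - m))%nat at 2 3 4 by lia.
  set (d := (r - m)%nat).
  assert (HX := m1sq m). assert (HY := m1sq d). assert (HZ := m1sq k).
  assert (HX0 := m1nz m). assert (HY0 := m1nz d). assert (HZ0 := m1nz k).
  rewrite pS, !pow_add.
  set (X := (-1) ^ m) in *. set (Y := (-1) ^ d) in *. set (Z := (-1) ^ k) in *.
  assert (H : Y * ((X*Y*Z) * (X*Y*Z*Z)) = - X * (-1 * (X*Y*Z))).
  { replace (Y * ((X*Y*Z) * (X*Y*Z*Z))) with ((X*X)*(Y*Y)*(Z*Z)*(Y*Z)) by ring.
    replace (- X * (-1 * (X*Y*Z))) with ((X*X)*(Y*Z)) by ring.
    rewrite HX, HY, HZ. ring. }
  rewrite <- H. field. repeat split; auto.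
Qed.

Lemma Cmod_Cpow' c m : Cmod (Cpow c m) = Cmod c ^ m.
Proof. induction m; simpl. apply Cmod_1. rewrite Cmod_mult, IHm. reflexivity. Qed.

Lemma Cpow_nz' c m : c <> RtoC 0 -> Cpow c m <> RtoC 0.
Proof.
  intros Hc H. assert (H0 : Cmod (Cpow c m) = 0) by (rewrite H; apply Cmod_0).
  rewrite Cmod_Cpow' in H0. revert H0. apply pow_nonzero. intros H1. apply Hc. apply Cmod_eq_0. exact H1.
Qed.

Lemma Cpow_1mw w p : Cpow (Cminus (RtoC 1) w) p = Cmult (RtoC ((-1) ^ p)) (Cpow (Cminus w (RtoC 1)) p).
Proof.
  induction p; simpl. apply Ceq; simpl; ring.
  rewrite IHp, RtoC_mult, RtoC_m1. ring.
Qed.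

Lemma FF_zero v w j r : ccf v j r = RtoC 0 -> FF v w j r = RtoC 0.
Proof. intros H. unfold FF. rewrite H. unfold Cdiv. ring. Qed.

Lemma key v w r M : w <> RtoC 1 -> (2 * r < M)%nat ->
  csum (fun j => FF v w j r) M = Cminus (U_fun r w v) (RtoC (if Nat.eqb r 0 then 1 else 0)).
Proof.
  intros Hw HM.
  assert (Hw1 : Cminus w (RtoC 1) <> RtoC 0).
  { intros H. apply Hw. apply Ceq; injection H; simpl; intros; lra. }
  assert (A : csum (fun j => FF v w j r) M = csum (fun k => FF v w (r + k) r) (S r)).
  { replace M with (r + (S r + (M - S (2 * r))))%nat by lia.
    rewrite csum_split. rewrite csum_zero.
    2:{ intros i Hi. apply FF_zero. apply ccf_high. exact Hi. }
    rewrite csum_split. rewrite (csum_zero (fun i => FF v w (r + (S r + i)) r)).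
    2:{ intros i Hi. apply FF_zero. rewrite ccf_TT by lia. apply TT_low. lia. }
    ring. }
  rewrite A. unfold U_fun.
  match goal with |- _ = Cminus (Cminus _ ?Y) _ => set (X := Y) end.
  transitivity (Copp X).
  2:{ unfold Cminus. ring. }
  assert (X1 : X = csum (fun k => csum (fun m =>
       Cmult (Cmult (RtoC ((-1) ^ m)) (cbinom v (r - m)))
         (Cmult (Cdiv w (Cpow (Cminus w (RtoC 1)) (r + k + 1)))
            (RtoC (INR (Factorial.fact (r + k)) / INR (Factorial.fact k) * deMoivre harm_seq m k)))) (S r)) (S r)).
  { unfold X. rewrite <- csum_swap. apply csum_ext. intros m Hm. rewrite <- csum_scal.
    symmetry. replace (S r) with (S m + (r - m))%nat by lia. rewrite csum_split.
    match goal with |- context [csum ?F (r - m)%nat] => rewrite (csum_zero F (r - m)) end.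
    2:{ intros i Hi. rewrite dm_low by lia. rewrite Rmult_0_r. unfold Cdiv. ring. }
    ring. }
  rewrite X1, <- csum_opp. apply csum_ext. intros k Hk.
  unfold FF. rewrite (ccf_TT v (r + k) r) by lia. replace (r + k - r)%nat with k by lia.
  rewrite TT_expand.
  set (K := Cdiv (Cmult (Cmult (RtoC ((-1) ^ (r + k))) w)
             (Cmult (RtoC ((-1) ^ (r + k + k)))
                (Cdiv (RtoC (INR (Factorial.fact (r + k)))) (RtoC (INR (Factorial.fact k))))))
             (Cpow (Cminus (RtoC 1) w) (S (r + k)))).
  transitivity (Cmult K (csum (fun m => Cmult (RtoC (deMoivre harm_seq m k)) (beta v (r - m))) (S r))).
  { unfold K. unfold Cdiv. ring. }
  rewrite <- csum_scal, <- csum_opp. apply csum_ext. intros m Hm.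
  unfold K, beta. rewrite Cpow_1mw. rewrite (sign_id r m k) by lia.
  replace (r + k + 1)%nat with (S (r + k)) by lia.
  assert (H1 := m1nz (r + k)). assert (H2 := m1nz (r + k + k)). assert (H3 := m1nz (S (r + k))).
  assert (H4 := m1nz m).
  rewrite RtoC_div by (apply Rmult_integral_contrapositive; split; auto).
  rewrite !RtoC_mult, RtoC_opp.
  rewrite (RtoC_div (INR (Factorial.fact (r + k)))) by apply INR_fact_neq_0.
  rewrite ?RtoC_mult.
  assert (HP := Cpow_nz' _ (S (r + k)) Hw1).
  assert (HF := fact_nz k).
  field. repeat split; try assumption; apply RtoC_neq; auto.
Qed.

Definition ggm (n : R) (v : C) (j : nat) : C := match j with O => RtoC 0 | S j' => gg n v j' end.

Lemma gg_S n v j : gg n v (S j) =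
  Cminus (Cmult (Cminus v (RtoC (INR j))) (gg n v j)) (Cmult (RtoC (n * INR j)) (ggm n v j)).
Proof.
  unfold gg at 1. rewrite pp_S.
  replace (ppm n (aa n v) j 1) with (ggm n v j) by (destruct j; reflexivity).
  fold (gg n v j). set (P := gg n v j). set (Q := ggm n v j). unfold aa.
  destruct P, Q, v. apply Ceq; simpl; ring.
Qed.

Definition Qg (n : R) (v : C) (j : nat) := forall L, (j < L)%nat ->
  Cmult (gg n v j) (RtoC ((/ n) ^ j)) = csum (fun r => Cmult (ccf v j r) (RtoC ((/ n) ^ r))) L.
Definition Qgm (n : R) (v : C) (j : nat) := match j with O => True | S j' => Qg n v j' end.

Lemma Qg_step n v j : n <> 0 -> Qg n v j -> Qgm n v j -> Qg n v (S j).
Proof.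
  intros Hn IH IHm [|L] HL; [lia|].
  rewrite csum_front. simpl ccf at 1.
  assert (E : csum (fun r => Cmult (ccf v (S j) (S r)) (RtoC ((/ n) ^ S r))) L =
     Cminus (Cmult (Cmult (Cminus v (RtoC (INR j))) (RtoC (/ n))) (csum (fun r => Cmult (ccf v j r) (RtoC ((/ n) ^ r))) L))
            (Cmult (Cmult (RtoC (INR j)) (RtoC (/ n))) (csum (fun r => Cmult (ccfm v j r) (RtoC ((/ n) ^ r))) L))).
  { unfold Cminus. rewrite <- !csum_scal, <- csum_opp, <- csum_plus. apply csum_ext. intros r Hr.
    rewrite ccf_SS, pS, RtoC_mult. ring. }
  rewrite E. rewrite <- (IH L) by lia.
  rewrite gg_S.
  assert (Hn' : RtoC n <> RtoC 0) by (apply RtoC_neq; auto).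
  destruct j as [|j'].
  - rewrite csum_zero by (intros; simpl; ring). simpl. apply Ceq; simpl; field; auto.
  - simpl ccfm. simpl in IHm. rewrite <- (IHm L) by lia. simpl ggm.
    rewrite !pS, !RtoC_mult. rewrite RtoC_inv by auto. field. auto.
Qed.

Lemma gg_poly n v j L : n <> 0 -> (j < L)%nat ->
  Cmult (gg n v j) (RtoC ((/ n) ^ j)) = csum (fun r => Cmult (ccf v j r) (RtoC ((/ n) ^ r))) L.
Proof.
  intros Hn. revert L.
  assert (H : forall j, Qg n v j /\ Qg n v (S j)).
  { clear j. intros j. induction j as [|j [IH1 IH2]].
    - assert (H0 : Qg n v 0).
      { intros [|L] HL; [lia|]. rewrite csum_front. rewrite csum_zero by (intros; simpl; ring).
        simpl. apply Ceq; simpl; ring. }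
      split; auto. apply Qg_step; simpl; auto.
    - split; auto. apply Qg_step; simpl; auto. }
  apply H.
Qed.

Lemma Cmod_csum_le f n : Cmod (csum f n) <= rsum (fun i => Cmod (f i)) n.
Proof.
  induction n; simpl. rewrite Cmod_0. lra.
  eapply Rle_trans; [apply Cmod_triangle|]. lra.
Qed.

Lemma rsum_le f g n : (forall i, (i < n)%nat -> f i <= g i) -> rsum f n <= rsum g n.
Proof.
  induction n; intros H; simpl. lra.
  assert (rsum f n <= rsum g n) by (apply IHn; intros; apply H; lia).
  assert (f n <= g n) by (apply H; lia). lra.
Qed.

Lemma rsum_scal c f n : rsum (fun i => c * f i) n = c * rsum f n.
Proof. induction n; simpl. ring. rewrite IHn. ring. Qed.

Lemma Cpow_mult a b p : Cpow (Cmult a b) p = Cmult (Cpow a p) (Cpow b p).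
Proof. induction p; simpl. apply Ceq; simpl; ring. rewrite IHp. ring. Qed.

Lemma Cpow_RtoC x p : Cpow (RtoC x) p = RtoC (x ^ p).
Proof. induction p; simpl. reflexivity. rewrite IHp, RtoC_mult. reflexivity. Qed.

Lemma delta_sum x R0 : (1 <= R0)%nat ->
  csum (fun r => Cmult (RtoC (if Nat.eqb r 0 then 1 else 0)) (RtoC (x ^ r))) R0 = RtoC 1.
Proof.
  intros H. destruct R0 as [|R]; [lia|]. rewrite csum_front.
  rewrite csum_zero by (intros; simpl; apply Ceq; simpl; ring).
  simpl. apply Ceq; simpl; ring.
Qed.

Theorem proposition5p1 (w v : C) (hw : Re w <= 1) (hw1 : w <> RtoC 1) (R0 : nat)
  (hR : (1 <= R0)%nat) :
  exists K N : R, forall n : R, N <= n ->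
    Cmod (Cminus (S_fun n w v)
                 (csum (fun j => Cdiv (U_fun j w v) (RtoC (n ^ j))) R0))
    <= K / n ^ R0.
Proof.
  set (M := (R0 + (R0 + 2))%nat).
  set (CT := rsum (fun i => Cmod (csum (fun j => FF v w j (R0 + i)) M)) (R0 + 2)).
  set (CE := 2 * Cmod w * Ycst v M / Cmod (Cminus (RtoC 1) w) ^ M).
  exists (CT + CE), (2 * (INR M + Cmod v) + 2).
  intros n Hn.
  assert (Hv := Cmod_ge_0 v). assert (HMp := pos_INR M).
  assert (Hn2 : 2 <= n) by lra. assert (Hn0 : 0 < n) by lra. assert (Hnn : n <> 0) by lra.
  assert (HnC : RtoC n <> RtoC 0) by (apply RtoC_neq; auto).
  set (x := / n).
  assert (Hx0 : 0 < x) by (apply Rinv_0_lt_compat; lra).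
  assert (Hx1 : x <= 1) by (unfold x; rewrite <- Rinv_1; apply Rinv_le_contravar; lra).
  assert (Hw2 : Cminus (RtoC 1) w <> RtoC 0).
  { intros H. apply hw1. apply Ceq; injection H; simpl; intros; lra. }
  assert (Hw2m : 0 < Cmod (Cminus (RtoC 1) w)) by (apply Cmod_gt_0; auto).
  assert (Hc0 : cc0 n w = Cmult (RtoC n) (Cminus (RtoC 1) w)) by (unfold cc0, kk; apply Ceq; simpl; ring).
  assert (Hc : cc0 n w <> RtoC 0).
  { rewrite Hc0. intros H. assert (H0 : Cmod (Cmult (RtoC n) (Cminus (RtoC 1) w)) = 0) by (rewrite H; apply Cmod_0).
    rewrite Cmod_mult, Cmod_R, Rabs_pos_eq in H0 by lra. nra. }
  assert (Ha : 1 < fst (aa n v) - INR M).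
  { unfold aa. simpl. assert (H1 := re_le_Cmod v). assert (H2 := Rabs_maj2 (fst v)). unfold Re in H1. lra. }
  assert (HMR : (1 <= M)%nat) by (unfold M; lia).
  rewrite S_repr, (chain n w v M Hc Ha).
  assert (Hmain : Cmult (kk n w) (csum (fun j => Cdiv (Cmult (RtoC ((-1)^j)) (gg n v j)) (Cpow (cc0 n w) (S j))) M)
     = csum (fun r => Cmult (RtoC (x^r)) (csum (fun j => FF v w j r) M)) M).
  { rewrite <- csum_scal.
    transitivity (csum (fun j => csum (fun r => Cmult (RtoC (x^r)) (FF v w j r)) M) M).
    - apply csum_ext. intros j Hj.
      transitivity (Cmult (Cdiv (Cmult (RtoC ((-1)^j)) w) (Cpow (Cminus (RtoC 1) w) (S j)))
                          (csum (fun r => Cmult (ccf v j r) (RtoC (x^r))) M)).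
      + unfold x. rewrite <- (gg_poly n v j M Hnn Hj).
        rewrite Hc0, Cpow_mult, Cpow_RtoC. unfold kk.
        rewrite pow_inv, RtoC_inv by (apply pow_nonzero; auto).
        assert (H1 : RtoC (n ^ S j) <> RtoC 0) by (apply RtoC_neq; apply pow_nonzero; auto).
        assert (H2 : RtoC (n ^ j) <> RtoC 0) by (apply RtoC_neq; apply pow_nonzero; auto).
        assert (H3 := Cpow_nz' _ (S j) Hw2).
        replace (n ^ S j) with (n * n ^ j) by reflexivity. rewrite RtoC_mult.
        field. repeat split; auto.
      + rewrite <- csum_scal. apply csum_ext. intros r Hr. unfold FF. unfold Cdiv. ring.
    - rewrite csum_swap. apply csum_ext. intros r Hr. rewrite csum_scal. reflexivity. }
  rewrite Cmult_plus_distr_l, Hmain.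
  rewrite (csum_split _ R0 (R0 + 2)).
  rewrite (csum_ext (fun r => Cmult (RtoC (x^r)) (csum (fun j => FF v w j r) M))
                    (fun r => Cminus (Cmult (RtoC (x^r)) (U_fun r w v))
                                     (Cmult (RtoC (if Nat.eqb r 0 then 1 else 0)) (RtoC (x^r)))) R0).
  2:{ intros r Hr. rewrite key by (auto; unfold M; lia). ring. }
  rewrite (csum_ext (fun j => Cdiv (U_fun j w v) (RtoC (n ^ j))) (fun r => Cmult (RtoC (x^r)) (U_fun r w v)) R0).
  2:{ intros r Hr. unfold x. rewrite pow_inv, RtoC_inv by (apply pow_nonzero; auto). unfold Cdiv. ring. }
  set (A := csum (fun r => Cmult (RtoC (x ^ r)) (U_fun r w v)) R0).
  assert (HD : csum (fun r => Cminus (Cmult (RtoC (x^r)) (U_fun r w v))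
                                     (Cmult (RtoC (if Nat.eqb r 0 then 1 else 0)) (RtoC (x^r)))) R0
               = Cminus A (RtoC 1)).
  { unfold A. rewrite <- (delta_sum x R0 hR). unfold Cminus. rewrite <- csum_opp, <- csum_plus.
    apply csum_ext; intros; reflexivity. }
  rewrite HD.
  set (T := csum (fun i => Cmult (RtoC (x ^ (R0 + i))) (csum (fun j => FF v w j (R0 + i)) M)) (R0 + 2)).
  set (E := Cmult (kk n w) (Cdiv (Cmult (RtoC ((-1) ^ M)) (KK n w v M)) (Cpow (cc0 n w) M))).
  replace (Cminus (Cplus (RtoC 1) (Cplus (Cplus (Cminus A (RtoC 1)) T) E)) A) with (Cplus T E) by ring.
  eapply Rle_trans; [apply Cmod_triangle|].
  assert (HT : Cmod T <= x ^ R0 * CT).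
  { unfold T, CT. eapply Rle_trans; [apply Cmod_csum_le|]. rewrite <- rsum_scal.
    apply rsum_le. intros i Hi. rewrite Cmod_mult, Cmod_R.
    rewrite Rabs_pos_eq by (apply pow_le; lra).
    apply Rmult_le_compat_r; [apply Cmod_ge_0|].
    rewrite pow_add. rewrite <- (Rmult_1_r (x ^ R0)) at 2.
    apply Rmult_le_compat_l; [apply pow_le; lra|].
    rewrite <- (pow1 i). apply pow_incr. lra. }
  assert (HK : Cmod (KK n w v M) <= 2 * (Ycst v M * sqrt n ^ M)).
  { unfold KK. apply CRInt_bound. apply Y_cont. exact Ha.
    intros z Hz. apply Y_bound; auto; lra. }
  assert (Hsq : sqrt n ^ M = n ^ (S R0)).
  { replace M with (2 * S R0)%nat by (unfold M; lia). rewrite pow_mult, pow2_sqrt by lra. reflexivity. }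
  assert (HE : Cmod E <= CE / n ^ R0).
  { unfold E, CE. rewrite Cmod_mult. unfold Cdiv. rewrite !Cmod_mult, Cmod_inv by (apply Cpow_nz'; auto).
    rewrite Cmod_R, pow_1_abs, Cmod_Cpow', Hc0, Cmod_mult, Cmod_R, Rabs_pos_eq by lra.
    unfold kk. rewrite Cmod_mult, Cmod_R, Rabs_pos_eq by lra.
    rewrite Hsq in HK.
    assert (Hpn : 0 < n ^ R0) by (apply pow_lt; lra).
    assert (Hpw : 0 < Cmod (Cminus (RtoC 1) w) ^ M) by (apply pow_lt; lra).
    assert (HYc : 0 <= Ycst v M).
    { unfold Ycst. apply Rmult_le_pos; [apply Rmult_le_pos; [apply cst_pos| left; apply exp_pos]|].
      eapply Rle_trans; [|apply (gauss 0 (Cmod v + 2) M); [lra|lra|exact HMR]].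
      apply Rmult_le_pos; [apply pow_le; lra| left; apply exp_pos]. }
    replace ((n * Cmod (Cminus (RtoC 1) w)) ^ M) with (n ^ M * Cmod (Cminus (RtoC 1) w) ^ M) by (rewrite Rpow_mult_distr; reflexivity).
    replace (n ^ M) with (n ^ R0 * (n * n ^ (S R0))) by (unfold M; replace (R0 + (R0 + 2))%nat with (R0 + S (S R0))%nat by lia; rewrite pow_add; reflexivity).
    assert (Hp1 : 0 < n ^ S R0) by (apply pow_lt; lra).
    assert (Hw0 := Cmod_ge_0 w).
    apply Rle_trans with (n * Cmod w * (1 * (2 * (Ycst v M * n ^ S R0))) * / (n ^ R0 * (n * n ^ S R0) * Cmod (Cminus (RtoC 1) w) ^ M)).
    - set (D := n ^ R0 * (n * n ^ S R0) * Cmod (Cminus (RtoC 1) w) ^ M).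
      assert (HD0 : 0 < / D) by (apply Rinv_0_lt_compat; unfold D; apply Rmult_lt_0_compat; [apply Rmult_lt_0_compat; [exact Hpn| apply Rmult_lt_0_compat; [exact Hn0|exact Hp1]] | exact Hpw]).
      assert (0 <= n * Cmod w) by nra.
      replace (n * Cmod w * (1 * Cmod (KK n w v M) * / D)) with ((n * Cmod w) * Cmod (KK n w v M) * / D) by ring.
      replace (n * Cmod w * (1 * (2 * (Ycst v M * n ^ S R0))) * / D) with ((n * Cmod w) * (2 * (Ycst v M * n ^ S R0)) * / D) by ring.
      apply Rmult_le_compat_r; [lra|]. apply Rmult_le_compat_l; lra.
    - right. field. repeat split; lra. }
  assert (Hxr : x ^ R0 = / n ^ R0) by (unfold x; apply pow_inv).
  rewrite Hxr in HT. unfold Rdiv in *. lra.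
Qed.
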